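(* Let $n>d+1$ and let $\mathcal{F}_1,\dots,\mathcal{F}_n$ be collections of axis-parallel boxes in $\mathbb{R}^d$ such that for all $i\neq j$, $B\in\mathcal{F}_i$ and $B'\in\mathcal{F}_j$ we have $B\cap B'\neq\emptyset$. Then there exist $i\in[n]$ and, for each $j\in[n]\setminus\{i\}$, a box $B_j\in\mathcal{F}_j$ such that $\mathcal{F}_i\cup\{B_j: j\in[n],\,j\neq i\}$ is $2$-pierceable.
   Context: An axis-parallel box in $\mathbb{R}^d$ is a set $[\alpha_1,\beta_1]\times\dots\times[\alpha_d,\beta_d]$ with real $\alpha_j\le\beta_j$. A family is $2$-pierceable if some set of at most $2$ points of $\mathbb{R}^d$ meets every member of it. *)

(* Defs.v *)
From HB Require Import structures.
From mathcomp Require Import all_boot all_order all_algebra.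
From mathcomp Require Import reals.
Set Implicit Arguments. Unset Strict Implicit. Unset Printing Implicit Defensive.
Import Order.TTheory GRing.Theory Num.Theory.
Local Open Scope ring_scope.

Record box (R : realType) (d : nat) := Box {
  lo : 'I_d -> R;
  hi : 'I_d -> R;
  lo_le_hi : forall k, lo k <= hi k
}.

Definition in_box (R : realType) (d : nat) (x : 'I_d -> R) (B : box R d) : Prop :=
  forall k : 'I_d, lo B k <= x k <= hi B k.

Definition boxes_meet (R : realType) (d : nat) (B B' : box R d) : Prop :=
  exists x : 'I_d -> R, in_box x B /\ in_box x B'.

(* A family (a predicate on boxes) is 2-pierceable: some set of at most 2 points
   (two possibly equal points p, q) meets every member. *)
Definition two_pierceable (R : realType) (d : nat) (F : box R d -> Prop) : Prop :=
  exists p q : 'I_d -> R, forall B, F B -> in_box p B \/ in_box q B.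

(* Main.v *)
Require Import Defs.
From HB Require Import structures.
From mathcomp Require Import all_boot all_order all_algebra.
From mathcomp Require Import reals.
From mathcomp Require Import boolp classical_sets.
Import Order.TTheory GRing.Theory Num.Theory.
Local Open Scope ring_scope.
Local Open Scope classical_set_scope.

Lemma common_point (R : realType) (d : nat) (P : box R d -> Prop) :
  (exists B, P B) ->
  (forall B B', P B -> P B' -> forall k, lo B k <= hi B' k) ->
  exists x : 'I_d -> R, forall B, P B -> in_box x B.
Proof.
move=> [B0 PB0] H.
exists (fun k => sup [set lo B k | B in P]) => B PB k.
have hs : has_sup [set lo B k | B in P].
  split; first by exists (lo B0 k); exists B0.
  exists (hi B0 k) => _ [B' PB' <-]; exact: H.
apply/andP; split.
  by apply: sup_upper_bound => //; exists B.
apply: ge_sup; first by exists (lo B0 k); exists B0.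
by move=> _ [B' PB' <-]; exact: H.
Qed.

Theorem lemma1 (R : realType) (d n : nat) (F : 'I_n -> box R d -> Prop) :
  (d.+1 < n)%N ->
  (forall i : 'I_n, exists B : box R d, F i B) ->
  (forall (i j : 'I_n) (B B' : box R d), i != j -> F i B -> F j B' -> boxes_meet B B') ->
  exists (i : 'I_n) (Bs : 'I_n -> box R d),
    (forall j : 'I_n, j != i -> F j (Bs j)) /\
    two_pierceable (fun B : box R d => F i B \/ exists j : 'I_n, j != i /\ B = Bs j).
Proof.
move=> hn hne hm.
have hle : forall i j B B', i != j -> F i B -> F j B' -> forall k, lo B k <= hi B' k.
  move=> i j B B' ij FB FB' k.
  have [x [/(_ k)/andP[h1 _] /(_ k)/andP[_ h2]]] := hm i j B B' ij FB FB'.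
  exact: le_trans h1 h2.
have [C HC] := choice hne.
pose bad i k := exists B B', F i B /\ F i B' /\ hi B' k < lo B k.
have bad_uniq : forall k i j, bad i k -> bad j k -> i = j.
  move=> k i j [B1 [B2 [F1 [F2 h12]]]] [B3 [B4 [F3 [F4 h34]]]].
  apply/eqP; apply: contraT => ij.
  have a := hle _ _ _ _ ij F1 F4 k.
  have ji : j != i by rewrite eq_sym.
  have b := hle j i B3 B2 ji F3 F2 k.
  have := lt_trans h12 (le_lt_trans a (lt_le_trans h34 b)).
  by rewrite ltxx.
have n0 : 'I_n by exists 0%N; apply: leq_trans hn.
have Hex : forall k, exists j, forall i, bad i k -> i = j.
  move=> k.
  have [[i bi]|nb] := pselect (exists i, bad i k).
    by exists i => j bj; exact: bad_uniq bj bi.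
  by exists n0 => i bi; exfalso; apply: nb; exists i.
have [b Hb] := choice Hex.
set S := [set b k | k in 'I_d]%SET.
have [i Hi] : exists i, i \notin S.
  case: (pickP (fun i => i \notin S)) => [i Hi|H]; first by exists i.
  have : [set: 'I_n]%SET \subset S.
    by apply/fintype.subsetP => i _; have := H i; rewrite /= => /negbFE.
  move/subset_leq_card; rewrite cardsT card_ord => h.
  have := leq_trans h (leq_imset_card _ _); rewrite card_ord => h2.
  by have := leq_trans hn h2; rewrite ltnNge leqnSn.
have [p Hp] : exists p : 'I_d -> R, forall B, F i B -> in_box p B.
  apply: common_point; first exact: hne.
  move=> B B' FB FB' k; rewrite leNgt; apply/negP => h.
  have /Hb ebi : bad i k by exists B, B'.
  by move: Hi; rewrite ebi imset_f.
have [j0 j0i] : exists j0 : 'I_n, j0 != i.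
  case: (pickP (fun j => j != i)) => [j Hj|H]; first by exists j.
  exfalso.
  have : (n <= 1)%N.
    rewrite -(card_ord n) -(cards1 i) subset_leq_card //.
    by apply/fintype.subsetP => j _; rewrite inE; have := H j => /negbFE.
  by move=> h; have := leq_trans hn h.
have [q Hq] : exists q : 'I_d -> R,
    forall B, (exists j, j != i /\ B = C j) -> in_box q B.
  apply: common_point; first by exists (C j0), j0.
  move=> _ _ [j [ji ->]] [j' [j'i ->]] k.
  have [<-|jj'] := eqVneq j j'; first exact: lo_le_hi.
  exact: hle jj' (HC j) (HC j') k.
exists i, C; split; first by move=> j _; exact: HC.
exists p, q => B [FB|hB]; [left; exact: Hp | right; exact: Hq].
Qed.
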